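(* If all locks are fair and the underlying system scheduler is fair, then every invocation of a method (begin, read, write, tryC) of the algorithm KSFTM eventually completes.
   Context: Algorithm KSFTM (parameters: integer $K\ge1$, constants $C>0$, $incVal\ge1$). A global atomic counter, initially 1. Each t-object $x$ stores at most $K$ versions $\langle ts, val, rl, vrt\rangle$. Each transaction $T_i$ has timestamps $its_i, cts_i, wts_i = cts_i + C(cts_i-its_i)$, limits $tltl_i, tutl_i$, a commit time $ct_i$, a flag $valid_i$ and a status, protected by a per-transaction lock; each t-object has a lock. begin: reads and atomically increments the counter, initializes the transaction's fields; no locks, no loops. read($x$): if $x$ is local returns it; otherwise acquires the lock of $x$ and then the lock of $T_i$, finds the version with largest $ts<wts_i$ and the one with smallest $ts>wts_i$, updates $tltl_i,tutl_i$, possibly aborts (releasing all its locks), otherwise appends $T_i$ to that version's reader list, releases the locks and returns. write: stores locally. tryC: acquires the locks of all t-objects in its write set in a fixed predefined global order, then the locks of all transactions in the reader lists of the relevant versions together with its own lock, again in a fixed predefined global order; then performs loops only over the (finite) write set and the finite reader lists (validation, marking or aborting, updating limits, incrementing the counter, installing new versions), and finally releases all locks; any abort releases all locks held. Fairness of a scheduler means no thread is forever delayed or crashed; a fair lock is eventually granted to every requester once it is repeatedly released. *)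

(* Defs.v *)
(* Only the aspects that matter for
   termination of method invocations are modelled: which locks are acquired,
   in which order, the finiteness of the remaining (lock-free) work, and the
   release of all held locks when a method returns (normally or by abort). *)
From mathcomp Require Import all_boot.
Set Implicit Arguments. Unset Strict Implicit. Unset Printing Implicit Defensive.

(* Locks: one per t-object x (Obj x) and one per transaction T_i (Tx i). *)
Inductive lock := Obj of nat | Tx of nat.

Definition lock_eq_dec (a b : lock) : {a = b} + {a <> b}.
Proof. decide equality; exact: (decP eqP). Defined.

(* Atomic actions of a method invocation: a lock acquisition, or one
   lock-free local step (reading/writing fields, one loop iteration, ...). *)
Inductive action := Acq of lock | Local.

(* The methods of KSFTM; [i] is the id of the invoking transaction, [x] the
   t-object read. *)
Inductive meth := MBegin | MRead of nat & nat | MWrite | MTryC of nat .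

(* An invocation: which method, and the (finite) sequence of atomic actions it
   performs before returning.  Returning (commit or abort) releases all locks
   held by the invoking thread in one step. *)
Record invocation := Inv { imeth : meth; iacts : seq action }.

Definition is_local (a : action) : bool := if a is Local then true else false.
Definition acq_of (a : action) : seq lock := if a is Acq l then [:: l] else [::].
Definition acquisitions (s : seq action) : seq lock := flatten (map acq_of s).

(* Shapes of invocations of KSFTM, as described:
   - begin / write: no locks, finitely many local steps;
   - read(x) by T_i: either x is local (no locks), or lock of x then lock of
     T_i, then finitely many local steps (possibly ending in abort);
   - tryC by T_i: locks of the write set (t-objects) in the fixed global order,
     then locks of the reader-list transactions together with its own lock
     T_i in the fixed global order, with finitely many local steps. *)
Definition ksftm_shape (iv : invocation) : Prop :=
  match imeth iv with
  | MBegin | MWrite => all is_local (iacts iv)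
  | MRead x i =>
      all is_local (iacts iv) \/
      exists rest, iacts iv = Acq (Obj x) :: Acq (Tx i) :: rest /\ all is_local rest
  | MTryC i =>
      exists (ws ts : seq nat),
        sorted ltn ws /\ sorted ltn ts /\ i \in ts /\
        acquisitions (iacts iv) = map Obj ws ++ map Tx ts
  end.

Record state := St {
  idx   : nat -> nat;            (* index of the current invocation of thread t *)
  pc    : nat -> nat;            (* number of actions of it already performed *)
  owner : lock -> option nat
}.

Definition init_state : state := St (fun _ => 0) (fun _ => 0) (fun _ => None).

(* [prog t n] : the n-th invocation made by thread t ([None]: t makes no
   n-th invocation, it has stopped invoking methods). *)
Definition program := nat -> nat -> option invocation.

Inductive step (prog : program) (s : state) (t : nat) : state -> Prop :=
| StepLocal iv :
    prog t (idx s t) = Some iv -> pc s t < size (iacts iv) ->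
    nth Local (iacts iv) (pc s t) = Local ->
    step prog s t (St (idx s) (fun u => if u == t then (pc s t).+1 else pc s u) (owner s))
| StepAcq iv l :
    prog t (idx s t) = Some iv -> pc s t < size (iacts iv) ->
    nth Local (iacts iv) (pc s t) = Acq l -> owner s l = None ->
    step prog s t (St (idx s) (fun u => if u == t then (pc s t).+1 else pc s u)
                      (fun l' => if lock_eq_dec l' l then Some t else owner s l'))
| StepBlocked iv l u :
    prog t (idx s t) = Some iv -> pc s t < size (iacts iv) ->
    nth Local (iacts iv) (pc s t) = Acq l -> owner s l = Some u ->
    step prog s t s
| StepReturn iv :
    prog t (idx s t) = Some iv -> pc s t = size (iacts iv) ->
    step prog s t (St (fun u => if u == t then (idx s t).+1 else idx s u)
                      (fun u => if u == t then 0 else pc s u)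
                      (fun l => if owner s l is Some u then
                                  (if u == t then None else Some u) else None))
| StepIdle :
    prog t (idx s t) = None -> step prog s t s.

Definition execution (prog : program) (ex : nat -> state) (sched : nat -> nat) : Prop :=
  ex 0 = init_state /\ forall k, step prog (ex k) (sched k) (ex k.+1).

Definition threads_below (N : nat) (sched : nat -> nat) : Prop :=
  forall k, sched k < N.

Definition fair_scheduler (N : nat) (sched : nat -> nat) : Prop :=
  forall t i, t < N -> exists j, i <= j /\ sched j = t.

Definition requesting (prog : program) (s : state) (t : nat) (l : lock) : Prop :=
  exists iv, prog t (idx s t) = Some iv /\ pc s t < size (iacts iv) /\
             nth Local (iacts iv) (pc s t) = Acq l.

Definition released_at (ex : nat -> state) (l : lock) (k : nat) : Prop :=
  owner (ex k) l <> None /\ owner (ex k.+1) l = None.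

(* Fair locks: a requester that keeps requesting a lock which is repeatedly
   (infinitely often) released is eventually granted it, i.e. it cannot stay
   a requester forever. *)
Definition fair_locks (prog : program) (ex : nat -> state) : Prop :=
  forall t l i,
    (forall j, i <= j -> requesting prog (ex j) t l) ->
    ~ (forall j, exists k, j <= k /\ released_at ex l k).

(* Main.v *)
From HB Require Import structures.
From mathcomp Require Import zify.
From mathcomp Require Import all_boot.
Require Import Defs.
From Stdlib Require Import Classical.
Set Implicit Arguments. Unset Strict Implicit. Unset Printing Implicit Defensive.

Definition llt (a b : lock) : bool :=
  match a, b with
  | Obj x, Obj y => x < y
  | Obj _, Tx _ => true
  | Tx _, Obj _ => false
  | Tx x, Tx y => x < y
  end.

Lemma llt_trans : transitive llt.
Proof.
move=> [y|y] [x|x] [z|z] //=; try exact: ltn_trans.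
Qed.

Lemma llt_irr a : llt a a = false.
Proof. by case: a => x /=; rewrite ltnn. Qed.

Definition lock_eqb (a b : lock) : bool :=
  match a, b with
  | Obj x, Obj y => x == y
  | Tx x, Tx y => x == y
  | _, _ => false
  end.

Lemma lock_eqP : Equality.axiom lock_eqb.
Proof.
move=> [x|x] [y|y] /=; try by constructor.
- by apply: (iffP eqP) => [->|[]].
- by apply: (iffP eqP) => [->|[]].
Qed.

HB.instance Definition _ := hasDecEq.Build lock lock_eqP.

Lemma acq_cons a s : acquisitions (a :: s) = acq_of a ++ acquisitions s.
Proof. by []. Qed.

Lemma acq_cat s1 s2 : acquisitions (s1 ++ s2) = acquisitions s1 ++ acquisitions s2.
Proof. by rewrite /acquisitions map_cat flatten_cat. Qed.

Lemma acq_nil s : all is_local s -> acquisitions s = [::].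
Proof. elim: s => [|[l|] s IH] //= /andP[_ H]; by rewrite acq_cons IH. Qed.

Lemma shape_sorted iv : ksftm_shape iv -> sorted llt (acquisitions (iacts iv)).
Proof.
rewrite /ksftm_shape; case: iv => m a /=; case: m => [|x i||i] /=.
- by move/acq_nil ->.
- case=> [/acq_nil -> // | [rest [-> /acq_nil H]]].
  by rewrite !acq_cons H.
- by move/acq_nil ->.
- case=> ws [ts [Hw [Ht [_ ->]]]].
  rewrite sorted_pairwise; last exact: llt_trans.
  rewrite pairwise_cat; apply/and3P; split.
  + by apply/allrelP => a1 b /mapP[x _ ->] /mapP[y _ ->].
  + rewrite pairwise_map. by rewrite (sorted_pairwise ltn_trans) in Hw.
  + rewrite pairwise_map. by rewrite (sorted_pairwise ltn_trans) in Ht.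
Qed.

Lemma acq_take_mono n m s l : n <= m -> l \in acquisitions (take n s) ->
  l \in acquisitions (take m s).
Proof.
move=> H; rewrite -(subnKC H) takeD acq_cat mem_cat => ->; done.
Qed.

Definition Inv (prog : program) (N : nat) (s : state) : Prop :=
  (forall v iv, prog v (idx s v) = Some iv -> pc s v <= size (iacts iv)) /\
  (forall l v, owner s l = Some v -> v < N /\
     exists iv, prog v (idx s v) = Some iv /\
       l \in acquisitions (take (pc s v) (iacts iv))).

Lemma Inv_step prog N s t s' : t < N -> Inv prog N s -> step prog s t s' -> Inv prog N s'.
Proof.
move=> tN [I1 I2]; case.
- move=> iv Hp Hlt Hn; split => /=.
  + move=> v iv'; case: (eqVneq v t) => [->|ne] H.
    * by rewrite Hp in H; case: H => <-.
    * exact: I1 H.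
  + move=> l v /I2 [vN [iv' [Hp' Hin]]]; split => //; exists iv'; split => //.
    case: (eqVneq v t) => [e|ne]; last by [].
    by apply: acq_take_mono Hin; rewrite e.
- move=> iv l Hp Hlt Hn Ho; split => /=.
  + move=> v iv'; case: (eqVneq v t) => [->|ne] H.
    * by rewrite Hp in H; case: H => <-.
    * exact: I1 H.
  + move=> l' v; case: lock_eq_dec => [e|ne]; [subst l'; case=> <- |].
    * split => //; exists iv; split => //; rewrite eqxx.
      rewrite -addn1 takeD acq_cat mem_cat (drop_nth Local Hlt) Hn /=.
      by rewrite mem_head orbT.
    * move/I2 => [vN [iv' [Hp' Hin]]]; split => //; exists iv'; split => //.
      case: (eqVneq v t) => [e|ne']; last by [].
      by apply: acq_take_mono Hin; rewrite e.
- by move=> *; split.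
- move=> iv Hp He; split => /=.
  + move=> v iv'; case: (eqVneq v t) => [->|ne] //= H.
    exact: I1 H.
  + move=> l v; case E: (owner s l) => [u|] //.
    case: (eqVneq u t) => [_ //|ne [e]]; subst u.
    have [vN [iv' [Hp' Hin]]] := I2 _ _ E.
    by rewrite (negbTE ne); split => //; exists iv'.
- by move=> *; split.
Qed.

Lemma Inv_all prog N ex sched : execution prog ex sched -> threads_below N sched ->
  forall k, Inv prog N (ex k).
Proof.
move=> [H0 Hs] Hb; elim=> [|k IH].
- rewrite H0; split => //= v iv _; exact: leq0n.
- exact: Inv_step (Hb k) IH (Hs k).
Qed.

Lemma requesting_owner_lt prog N s v l l' :
  (forall t n iv, prog t n = Some iv -> ksftm_shape iv) ->
  Inv prog N s -> owner s l = Some v -> requesting prog s v l' -> llt l l'.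
Proof.
move=> Hsh [_ I2] Ho [iv' [Hp' [Hlt Hn]]].
have [_ [iv [Hp Hin]]] := I2 _ _ Ho.
rewrite Hp in Hp'; case: Hp' => E; subst iv'.
have := shape_sorted (Hsh _ _ _ Hp).
rewrite -(cat_take_drop (pc s v) (iacts iv)) acq_cat (drop_nth Local Hlt) Hn acq_cons /=.
rewrite sorted_pairwise; last exact: llt_trans.
rewrite pairwise_cat => /and3P[/allrelP H _ _].
by apply: H => //; rewrite mem_head.
Qed.

Lemma owner_keep prog s t s' l v : owner s l = Some v -> step prog s t s' ->
  owner s' l = None \/ owner s' l = Some v.
Proof.
move=> Ho; case => /=.
- by right.
- move=> iv l0 _ _ _ Ho0; case: lock_eq_dec => [e|ne]; last by right.
  by subst l0; rewrite Ho in Ho0.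
- by right.
- move=> *; rewrite Ho; case: eqP => _; [left|right] => //.
- by right.
Qed.

Lemma idx_change prog s t s' v l : step prog s t s' -> idx s' v <> idx s v ->
  owner s l = Some v -> owner s' l = None.
Proof.
case => //=.
move=> iv _ _ Hne Ho; rewrite Ho; move: Hne; case: (eqVneq v t) => //.
Qed.

Lemma idx_step prog s t s' v : step prog s t s' ->
  idx s' v = idx s v \/ idx s' v = (idx s v).+1.
Proof.
case => /=; try by left.
move=> *; case: (eqVneq v t) => [->|ne]; [right|left] => //.
Qed.

Lemma pc_step prog s t s' v : step prog s t s' -> idx s' v = idx s v -> pc s v <= pc s' v.
Proof.
case => /=.
- move=> *; case: (eqVneq v t) => [->|ne] //; exact: leqnSn.
- move=> *; case: (eqVneq v t) => [->|ne] //; exact: leqnSn.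
- by [].
- move=> iv _ _; case: (eqVneq v t) => [e|ne] //= H.
  subst v; lia.
- by [].
Qed.

Lemma sched_step prog s v s' : step prog s v s' -> prog v (idx s v) <> None ->
  idx s' v = idx s v -> pc s' v = pc s v -> exists l, requesting prog s v l.
Proof.
case => /=.
- by move=> iv _ _ _ _ _; rewrite eqxx => H; lia.
- by move=> iv l _ _ _ _ _ _; rewrite eqxx => H; lia.
- move=> iv l u Hp Hlt Hn _ _ _ _; exists l; exists iv; done.
- by move=> iv _ _ _; rewrite eqxx => H; lia.
- by move=> H H'; case: H'.
Qed.

Lemma acq_forced prog s u s' l : step prog s u s' -> requesting prog s u l ->
  owner s l = None -> owner s' l = Some u.
Proof.
move=> Hs [iv [Hp [Hlt Hn]]] Ho; case: Hs => /=.
- by move=> iv' Hp'; rewrite Hp in Hp'; case: Hp' => <- _; rewrite Hn.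
- move=> iv' l' Hp'; rewrite Hp in Hp'; case: Hp' => <- _; rewrite Hn => -[->] _.
  by case: (lock_eq_dec l' l').
- move=> iv' l' u' Hp'; rewrite Hp in Hp'; case: Hp' => <- _; rewrite Hn => -[<-].
  by rewrite Ho.
- by move=> iv' Hp'; rewrite Hp in Hp'; case: Hp' => <- E; rewrite E ltnn in Hlt.
- by rewrite Hp.
Qed.

Lemma requesting_ext prog s s' v l : idx s v = idx s' v -> pc s v = pc s' v ->
  requesting prog s v l -> requesting prog s' v l.
Proof. by rewrite /requesting => <- <-. Qed.

Lemma requesting_uniq prog s w l l' : requesting prog s w l -> requesting prog s w l' -> l = l'.
Proof.
move=> [iv [Hp [_ Hn]]] [iv' [Hp' [_ Hn']]].
by rewrite Hp in Hp'; case: Hp' => E; subst iv'; rewrite Hn in Hn'; case: Hn'.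
Qed.

Lemma mono_from (f : nat -> nat) k : (forall j, k <= j -> f j <= f j.+1) ->
  forall j, k <= j -> f k <= f j.
Proof.
move=> H; elim=> [|j IH]; first by rewrite leqn0 => /eqP ->.
rewrite leq_eqVlt => /orP[/eqP -> //| Hk].
exact: leq_trans (IH Hk) (H _ Hk).
Qed.

Lemma ev_const (f : nat -> nat) B : forall d k, B - f k <= d ->
  (forall j, k <= j -> f j <= f j.+1) -> (forall j, k <= j -> f j <= B) ->
  exists k', k <= k' /\ forall j, k' <= j -> f j = f k'.
Proof.
elim=> [|d IH] k Hd Hm Hb.
- exists k; split => // j Hj.
  apply/eqP; rewrite eqn_leq; apply/andP; split; last exact: mono_from.
  have := Hb _ Hj; lia.
- destruct (classic (exists j, k <= j /\ f j <> f k)) as [[j [Hj Hne]]|Hn].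
  + have Hle := mono_from Hm Hj.
    have Hlt : f k < f j by lia.
    have Hbj := Hb _ Hj.
    have [k' [Hk' H']] := IH j ltac:(lia)
      (fun j' Hj' => Hm j' (leq_trans Hj Hj')) (fun j' Hj' => Hb j' (leq_trans Hj Hj')).
    by exists k'; split => //; exact: leq_trans Hj Hk'.
  + exists k; split => // j Hj.
    by apply: NNPP => Hne; apply: Hn; exists j.
Qed.

Lemma stuck_requests prog N ex sched v k :
  execution prog ex sched -> threads_below N sched -> fair_scheduler N sched -> v < N ->
  (forall j, k <= j -> idx (ex j) v = idx (ex k) v) ->
  prog v (idx (ex k) v) <> None ->
  exists l k', k <= k' /\ forall j, k' <= j -> requesting prog (ex j) v l.
Proof.
move=> Hex Hb Hf vN Hc Hnn.
have HI := Inv_all Hex Hb.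
case E: (prog v (idx (ex k) v)) Hnn => [iv|] // _.
have Hm : forall j, k <= j -> pc (ex j) v <= pc (ex j.+1) v.
  move=> j Hj; apply: pc_step (Hex.2 j) _.
  by rewrite (Hc _ Hj) Hc // (leqW Hj).
have Hbd : forall j, k <= j -> pc (ex j) v <= size (iacts iv).
  move=> j Hj; apply: (HI j).1; by rewrite Hc.
have [k' [Hk' Hpc]] := @ev_const (fun j => pc (ex j) v) (size (iacts iv))
   (size (iacts iv) - pc (ex k) v) k (leqnn _) Hm Hbd.
have [j [Hj Hs]] := Hf v k' vN.
have Hidx j' : k' <= j' -> idx (ex j') v = idx (ex k') v.
  by move=> H; rewrite !Hc // (leq_trans Hk').
have Hst := Hex.2 j; rewrite Hs in Hst.
have [l Hr] : exists l, requesting prog (ex j) v l.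
  apply: (sched_step Hst).
  - by rewrite Hidx // Hc // E.
  - by rewrite !Hidx // leqW.
  - by rewrite /= !Hpc // leqW.
exists l, j; split; first exact: leq_trans Hk' Hj.
move=> j' Hj'; apply: requesting_ext Hr.
- by rewrite !Hidx // (leq_trans Hj).
- by rewrite /= !Hpc // (leq_trans Hj).
Qed.

Lemma bad_step prog N ex sched u l k :
  (forall t n iv, prog t n = Some iv -> ksftm_shape iv) ->
  execution prog ex sched -> threads_below N sched -> fair_scheduler N sched ->
  fair_locks prog ex ->
  u < N -> (forall j, k <= j -> requesting prog (ex j) u l) ->
  exists l' w k', llt l l' /\ w < N /\ forall j, k' <= j -> requesting prog (ex j) w l'.
Proof.
move=> Hsh Hex Hb Hf Hl uN Hr.
have HI := Inv_all Hex Hb.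
have [j0 Hj0] : exists j0, forall k1, j0 <= k1 -> ~ released_at ex l k1.
  have := Hl u l k Hr; move/not_all_ex_not => [j0 Hj0].
  by exists j0 => k1 Hk1 Hrel; apply: Hj0; exists k1.
destruct (classic (exists k1, maxn k j0 <= k1 /\ owner (ex k1) l <> None))
  as [[k1 [Hk1 Hno]]|Hnone].
- case Ev: (owner (ex k1) l) Hno => [v|] // _.
  have Hown : forall j, k1 <= j -> owner (ex j) l = Some v.
    elim=> [|j IH]; first by rewrite leqn0 => /eqP E0; rewrite -E0.
    rewrite leq_eqVlt => /orP[/eqP <- // | Hk].
    have Hj := IH Hk; case: (owner_keep Hj (Hex.2 j)) => // Hn.
    exfalso; apply: (Hj0 j); first lia.
    by split; [rewrite Hj | exact Hn].
  have [vN [iv [Hp _]]] := (HI k1).2 _ _ Ev.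
  have Hc : forall j, k1 <= j -> idx (ex j) v = idx (ex k1) v.
    elim=> [|j IH]; first by rewrite leqn0 => /eqP E0; rewrite -E0.
    rewrite leq_eqVlt => /orP[/eqP <- // | Hk].
    rewrite -(IH Hk); apply: NNPP => Hne.
    have := idx_change (Hex.2 j) Hne (Hown _ Hk).
    by rewrite Hown // ltnW.
  have [l' [k2 [Hk2 Hr']]] := stuck_requests Hex Hb Hf vN Hc ltac:(by rewrite Hp).
  exists l', v, k2; split => //.
  apply: requesting_owner_lt Hsh (HI k2) (Hown _ Hk2) (Hr' _ (leqnn _)).
- have [j [Hj Hs]] := Hf u (maxn k j0) uN.
  have Hst := Hex.2 j; rewrite Hs in Hst.
  have Hkj : k <= j by lia.
  have Ho : owner (ex j) l = None by apply: NNPP => H; apply: Hnone; exists j.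
  have := acq_forced Hst (Hr _ Hkj) Ho.
  have -> // : owner (ex j.+1) l = None.
  by apply: NNPP => H; apply: Hnone; exists j.+1; split => //; lia.
Qed.

Definition Stuck (prog : program) (ex : nat -> state) w l :=
  exists k, forall j, k <= j -> requesting prog (ex j) w l.

Lemma chain prog N ex sched (n : nat) :
  (forall t n iv, prog t n = Some iv -> ksftm_shape iv) ->
  execution prog ex sched -> threads_below N sched -> fair_scheduler N sched ->
  fair_locks prog ex ->
  forall l u, u < N -> Stuck prog ex u l ->
  exists s : seq nat, uniq s /\ size s = n /\
    forall w, w \in s -> w < N /\ exists l'', (l'' = l \/ llt l l'') /\ Stuck prog ex w l''.
Proof.
move=> Hsh Hex Hb Hf Hl; elim: n => [|n IH] l u uN [k Hk].
- by exists [::].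
- have [l' [w [k' [Hll' [wN Hw]]]]] := bad_step Hsh Hex Hb Hf Hl uN Hk.
  have [s [Hu [Hsz Hs]]] := IH l' w wN (ex_intro _ k' Hw).
  exists (u :: s); split; [|split; first by rewrite /= Hsz].
  + rewrite /= Hu andbT; apply/negP => Hin.
    have [_ [l'' [Hl'' [k'' Hk'']]]] := Hs _ Hin.
    have E := requesting_uniq (Hk (maxn k k'') (leq_maxl _ _)) (Hk'' _ (leq_maxr _ _)).
    subst l''; case: Hl'' => [E|H].
    * by subst l'; rewrite llt_irr in Hll'.
    * by have := llt_trans Hll' H; rewrite llt_irr.
  + move=> x; rewrite inE => /orP[/eqP ->|Hin].
    * split => //; exists l; split; [by left | by exists k].
    * have [xN [l'' [Hl'' HS]]] := Hs _ Hin; split => //; exists l''; split => //; right.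
      case: Hl'' => [-> //|H]; exact: llt_trans Hll' H.
Qed.

Theorem lemma10 (N : nat) (prog : program) (ex : nat -> state) (sched : nat -> nat) :
  (forall t n iv, prog t n = Some iv -> ksftm_shape iv) ->
  execution prog ex sched ->
  threads_below N sched ->
  fair_scheduler N sched ->
  fair_locks prog ex ->
  forall t i, t < N -> prog t (idx (ex i) t) <> None ->
    exists j, i <= j /\ idx (ex j) t = (idx (ex i) t).+1.
Proof.
move=> Hsh Hex Hb Hf Hl t i tN Hnn.
apply: NNPP => Hno.
have Hc : forall j, i <= j -> idx (ex j) t = idx (ex i) t.
  elim=> [|j IH]; first by rewrite leqn0 => /eqP E0; rewrite -E0.
  rewrite leq_eqVlt => /orP[/eqP <- // | Hk].
  case: (idx_step t (Hex.2 j)) => H; first by rewrite H IH.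
  exfalso; apply: Hno; exists j.+1; split; first exact: ltnW.
  by rewrite H IH.
have [l [k [_ Hk]]] := stuck_requests Hex Hb Hf tN Hc Hnn.
have [s [Hu [Hsz Hs]]] := chain N.+1 Hsh Hex Hb Hf Hl tN (ex_intro _ k Hk).
have : size s <= size (iota 0 N).
  by apply: uniq_leq_size Hu _ => x /Hs [xN _]; rewrite mem_iota.
by rewrite size_iota Hsz ltnn.
Qed.
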